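(* A group $G$ is unfactorizable if and only if $G$ is centerless and indecomposable.
   Context: A group $G$ is called unfactorizable if whenever $G=HK$ for subgroups $H,K\le G$ satisfying $hk=kh$ for all $h\in H$, $k\in K$, we have $H=1$ or $K=1$. $G$ is indecomposable if $G\cong H\times K$ implies that $H$ or $K$ is trivial. $G$ is centerless if its center is trivial. *)

(* Defs.v *)
Record group := Group {
  carrier :> Type;
  gmul : carrier -> carrier -> carrier;
  gone : carrier;
  ginv : carrier -> carrier;
  gmulA : forall x y z, gmul x (gmul y z) = gmul (gmul x y) z;
  gmul1l : forall x, gmul gone x = x;
  gmul1r : forall x, gmul x gone = x;
  gmulVl : forall x, gmul (ginv x) x = gone;
  gmulVr : forall x, gmul x (ginv x) = gone
}.

Arguments gmul {g} _ _.
Arguments gone {g}.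
Arguments ginv {g} _.

Definition is_subgroup (G : group) (H : G -> Prop) : Prop :=
  H gone /\ (forall x y, H x -> H y -> H (gmul x y)) /\ (forall x, H x -> H (ginv x)).

Definition trivial_subgroup (G : group) (H : G -> Prop) : Prop :=
  forall x, H x -> x = gone.

Definition trivial_group (G : group) : Prop := forall x : G, x = gone.

Definition unfactorizable (G : group) : Prop :=
  forall H K : G -> Prop, is_subgroup G H -> is_subgroup G K ->
    (forall g : G, exists h k, H h /\ K k /\ g = gmul h k) ->
    (forall h k, H h -> K k -> gmul h k = gmul k h) ->
    trivial_subgroup G H \/ trivial_subgroup G K.

Definition centerless (G : group) : Prop :=
  forall z : G, (forall g : G, gmul z g = gmul g z) -> z = gone.

Section Prod.
Variables H K : group.
Definition pmul (x y : H * K) : H * K := (gmul (fst x) (fst y), gmul (snd x) (snd y)).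
Definition pone : H * K := (gone, gone).
Definition pinv (x : H * K) : H * K := (ginv (fst x), ginv (snd x)).
Lemma pmulA x y z : pmul x (pmul y z) = pmul (pmul x y) z.
Proof. destruct x, y, z; unfold pmul; simpl; rewrite !gmulA; reflexivity. Qed.
Lemma pmul1l x : pmul pone x = x.
Proof. destruct x; unfold pmul, pone; simpl; rewrite !gmul1l; reflexivity. Qed.
Lemma pmul1r x : pmul x pone = x.
Proof. destruct x; unfold pmul, pone; simpl; rewrite !gmul1r; reflexivity. Qed.
Lemma pmulVl x : pmul (pinv x) x = pone.
Proof. destruct x; unfold pmul, pinv, pone; simpl; rewrite !gmulVl; reflexivity. Qed.
Lemma pmulVr x : pmul x (pinv x) = pone.
Proof. destruct x; unfold pmul, pinv, pone; simpl; rewrite !gmulVr; reflexivity. Qed.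
Definition prod_group : group :=
  Group (H * K) pmul pone pinv pmulA pmul1l pmul1r pmulVl pmulVr.
End Prod.

Definition isomorphic (G G' : group) : Prop :=
  exists f : G -> G',
    (forall x y, f (gmul x y) = gmul (f x) (f y)) /\
    (forall x y, f x = f y -> x = y) /\
    (forall y, exists x, f x = y).

Definition indecomposable (G : group) : Prop :=
  forall H K : group, isomorphic G (prod_group H K) ->
    trivial_group H \/ trivial_group K.

(* Main.v *)
Require Import Defs.
From Stdlib Require Import ClassicalEpsilon ProofIrrelevance.

Section GL.
Variable G : group.
Lemma mcl (a x y : G) : gmul a x = gmul a y -> x = y.
Proof. intro E. rewrite <- (gmul1l _ x), <- (gmul1l _ y), <- (gmulVl _ a), <- !gmulA, E. reflexivity. Qed.
Lemma mcr (a x y : G) : gmul x a = gmul y a -> x = y.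
Proof. intro E. rewrite <- (gmul1r _ x), <- (gmul1r _ y), <- (gmulVr _ a), !gmulA, E. reflexivity. Qed.
Lemma idem (a : G) : gmul a a = a -> a = gone.
Proof. intro E. apply (mcl a). rewrite gmul1r. exact E. Qed.
Lemma inv_uniq (a b : G) : gmul a b = gone -> b = ginv a.
Proof. intro E. apply (mcl a). rewrite gmulVr. exact E. Qed.
End GL.

Lemma hom_one (G G' : group) (f : G -> G') :
  (forall x y, f (gmul x y) = gmul (f x) (f y)) -> f gone = gone.
Proof. intro Hf. apply idem. rewrite <- Hf, gmul1l. reflexivity. Qed.

Section Sub.
Variables (G : group) (H : G -> Prop) (HS : is_subgroup G H).
Lemma sig_eq (a b : {x : G | H x}) : proj1_sig a = proj1_sig b -> a = b.
Proof. destruct a, b; simpl; intro E; subst. f_equal. apply proof_irrelevance. Qed.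
Definition smul (a b : {x : G | H x}) : {x : G | H x} :=
  exist _ (gmul (proj1_sig a) (proj1_sig b))
    (proj1 (proj2 HS) _ _ (proj2_sig a) (proj2_sig b)).
Definition sone : {x : G | H x} := exist _ gone (proj1 HS).
Definition sinv (a : {x : G | H x}) : {x : G | H x} :=
  exist _ (ginv (proj1_sig a)) (proj2 (proj2 HS) _ (proj2_sig a)).
Definition subg : group.
Proof.
  refine (Group {x : G | H x} smul sone sinv _ _ _ _ _);
  intros; apply sig_eq; simpl.
  - apply gmulA.
  - apply gmul1l.
  - apply gmul1r.
  - apply gmulVl.
  - apply gmulVr.
Defined.
End Sub.

Theorem lemma2p3 (G : group) :
  unfactorizable G <-> (centerless G /\ indecomposable G).
Proof.
  split.
  - intro U. split.
    + intros z Hz.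
      set (Z := fun x : G => forall g : G, gmul x g = gmul g x).
      assert (SZ : is_subgroup G Z).
      { split; [|split].
        - intro g. rewrite gmul1l, gmul1r. reflexivity.
        - intros x y Hx Hy g. rewrite <- gmulA, Hy, gmulA, Hx, gmulA. reflexivity.
        - intros x Hx g. apply (mcl _ x). rewrite gmulA, gmulVr, gmul1l.
          rewrite gmulA, Hx, <- gmulA, gmulVr, gmul1r. reflexivity. }
      assert (ST : is_subgroup G (fun _ => True)) by (repeat split).
      destruct (U Z (fun _ => True) SZ ST) as [T|T].
      * intro g. exists gone, g. repeat split; [apply SZ|]. rewrite gmul1l; reflexivity.
      * intros h k Hh _. apply Hh.
      * apply T. exact Hz.
      * apply T. exact I.
    + intros H K [f [Hf [Fi Fs]]].
      assert (F1 : f gone = gone) by (apply hom_one; exact Hf).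
      assert (Fv : forall x, f (ginv x) = ginv (f x)).
      { intro x. apply inv_uniq. rewrite <- Hf, gmulVr. exact F1. }
      set (H' := fun x : G => snd (f x) = gone).
      set (K' := fun x : G => fst (f x) = gone).
      assert (SH : is_subgroup G H').
      { unfold H'; split; [|split].
        - rewrite F1; reflexivity.
        - intros x y Hx Hy. rewrite Hf. simpl. rewrite Hx, Hy. apply gmul1l.
        - intros x Hx. rewrite Fv. simpl. rewrite Hx. symmetry. apply inv_uniq. apply gmul1l. }
      assert (SK : is_subgroup G K').
      { unfold K'; split; [|split].
        - rewrite F1; reflexivity.
        - intros x y Hx Hy. rewrite Hf. simpl. rewrite Hx, Hy. apply gmul1l.
        - intros x Hx. rewrite Fv. simpl. rewrite Hx. symmetry. apply inv_uniq. apply gmul1l. }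
      destruct (U H' K' SH SK) as [T|T].
      * intro g. destruct (f g) as [a b] eqn:Eg.
        destruct (Fs (a, gone)) as [h Eh]. destruct (Fs (gone, b)) as [k Ek].
        exists h, k. unfold H', K'. rewrite Eh, Ek. repeat split.
        apply Fi. rewrite Hf, Eh, Ek, Eg. simpl. unfold pmul; simpl.
        rewrite gmul1r, gmul1l. reflexivity.
      * intros h k Hh Hk. apply Fi. rewrite !Hf. unfold H', K' in *.
        destruct (f h) as [a1 b1], (f k) as [a2 b2]. simpl in *. subst.
        unfold pmul; simpl. rewrite !gmul1l, !gmul1r. reflexivity.
      * left. intro a. destruct (Fs (a, gone)) as [x Ex].
        assert (x = gone) as E0 by (apply T; unfold H'; rewrite Ex; reflexivity).
        subst x. rewrite F1 in Ex. injection Ex. auto.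
      * right. intro a. destruct (Fs (gone, a)) as [x Ex].
        assert (x = gone) as E0 by (apply T; unfold K'; rewrite Ex; reflexivity).
        subst x. rewrite F1 in Ex. injection Ex. auto.
  - intros [C I] H K SH SK Dec Com.
    assert (Cap : forall x, H x -> K x -> x = gone).
    { intros x Hx Kx. apply C. intro g. destruct (Dec g) as [h [k [Hh [Hk E]]]]. subst g.
      rewrite gmulA, <- (Com h x Hh Kx), <- !gmulA, (Com x k Hx Hk). reflexivity. }
    assert (Uq : forall h k h' k', H h -> K k -> H h' -> K k' ->
               gmul h k = gmul h' k' -> h = h' /\ k = k').
    { intros h k h' k' Hh Hk Hh' Hk' E.
      assert (X : gmul (ginv h') h = gone).
      { apply Cap.
        - apply SH; [apply SH; exact Hh'|exact Hh].
        - assert (gmul (ginv h') h = gmul k' (ginv k)) as ->.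
          { apply (mcr _ k). rewrite <- !gmulA, gmulVl, gmul1r, E, gmulA, gmulVl, gmul1l. reflexivity. }
          apply SK; [exact Hk'|apply SK; exact Hk]. }
      assert (h = h') as ->.
      { apply (mcl _ (ginv h')). rewrite X, gmulVl. reflexivity. }
      split; [reflexivity|]. apply (mcl _ h'). exact E. }
    assert (dec : forall g : G, {p : G * G | H (fst p) /\ K (snd p) /\ g = gmul (fst p) (snd p)}).
    { intro g. apply constructive_indefinite_description.
      destruct (Dec g) as [h [k [Hh [Hk E]]]]. exists (h, k). auto. }
    set (f := fun g : G =>
      (exist H (fst (proj1_sig (dec g))) (proj1 (proj2_sig (dec g))),
       exist K (snd (proj1_sig (dec g))) (proj1 (proj2 (proj2_sig (dec g))))) :
      prod_group (subg G H SH) (subg G K SK)).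
    assert (Fe : forall g h k (Hh : H h) (Hk : K k), g = gmul h k ->
               f g = ((exist H h Hh : subg G H SH), (exist K k Hk : subg G K SK))).
    { intros g h k Hh Hk E. unfold f.
      destruct (dec g) as [[h0 k0] [Hh0 [Hk0 E0]]]; simpl in *.
      rewrite E0 in E. destruct (Uq _ _ _ _ Hh0 Hk0 Hh Hk E). subst.
      f_equal; apply sig_eq; reflexivity. }
    destruct (I (subg G H SH) (subg G K SK)) as [T|T].
    + exists f. split; [|split].
      * intros x y. destruct (Dec x) as [h1 [k1 [Hh1 [Hk1 E1]]]].
        destruct (Dec y) as [h2 [k2 [Hh2 [Hk2 E2]]]].
        rewrite (Fe x _ _ Hh1 Hk1 E1), (Fe y _ _ Hh2 Hk2 E2).
        rewrite (Fe (gmul x y) (gmul h1 h2) (gmul k1 k2) (proj1 (proj2 SH) _ _ Hh1 Hh2)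
                   (proj1 (proj2 SK) _ _ Hk1 Hk2)).
        -- simpl. unfold pmul. simpl. f_equal; apply sig_eq; reflexivity.
        -- subst. rewrite <- !gmulA. f_equal. rewrite !gmulA. f_equal. symmetry. apply Com; assumption.
      * intros x y E. destruct (Dec x) as [h1 [k1 [Hh1 [Hk1 E1]]]].
        destruct (Dec y) as [h2 [k2 [Hh2 [Hk2 E2]]]].
        rewrite (Fe x _ _ Hh1 Hk1 E1), (Fe y _ _ Hh2 Hk2 E2) in E.
        injection E. intros. subst. reflexivity.
      * intros [[h Hh] [k Hk]]. exists (gmul h k). apply Fe. reflexivity.
    + left. intros x Hx. specialize (T (exist H x Hx)). apply (f_equal (@proj1_sig _ _)) in T. exact T.
    + right. intros x Hx. specialize (T (exist K x Hx)). apply (f_equal (@proj1_sig _ _)) in T. exact T.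
Qed.
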